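(* Let $\mathcal{O}$ be a nonempty set of quantum channels on $n$ qubits and let $\Psi$ be a quantum channel on $n$ qubits with $\gamma(\Psi)<\infty$. Let $\mathcal{O}_\Psi:=\mathcal{O}\cup\{\Psi\}$. Then for every sample $S=(z_1,\ldots,z_m)$ with $z_i\in\mathbb{F}_2^n\times\mathbb{F}_2^n$, \[ \hat{R}_S(\mathcal{F}(\mathcal{O}))\le \hat{R}_S(\mathcal{F}(\mathcal{O}_\Psi))\le (1+\gamma(\Psi))\,\hat{R}_S(\mathcal{F}(\mathcal{O})). \] Consequently, for every probability distribution $D$ on $\mathbb{F}_2^n\times\mathbb{F}_2^n$, \[ R_D(\mathcal{F}(\mathcal{O}))\le R_D(\mathcal{F}(\mathcal{O}_\Psi))\le (1+\gamma(\Psi))\,R_D(\mathcal{F}(\mathcal{O})). \]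
   Context: A quantum channel on $n$ qubits is a completely positive trace-preserving linear map on $2^n\times 2^n$ complex matrices. For a channel (or, more generally, a linear map) $\Phi$, define $f_\Phi:\mathbb{F}_2^n\times\mathbb{F}_2^n\to\mathbb{R}$ by $f_\Phi(x,y)=\mathrm{Tr}[\Phi(|x\rangle\langle x|)\,|y\rangle\langle y|]$, where $|x\rangle$ is the computational basis state; $f_\Phi$ depends linearly on $\Phi$. For a set $\Omega$ of channels, $\mathcal{F}(\Omega)=\{f_\Phi:\Phi\in\Omega\}$. For a class $\mathcal{G}$ of real-valued functions and a sample $S=(z_1,\ldots,z_m)$, the empirical Rademacher complexity is $\hat{R}_S(\mathcal{G})=\mathbb{E}_{\epsilon}\big[\sup_{g\in\mathcal{G}}\frac1m\sum_{i=1}^m\epsilon_i g(z_i)\big]$, where $\epsilon_1,\ldots,\epsilon_m$ are i.i.d. uniform on $\{-1,+1\}$. For a distribution $D$, $R_D(\mathcal{G})=\mathbb{E}_{S\sim D^m}[\hat{R}_S(\mathcal{G})]$ (samples $z_i$ i.i.d. from $D$). $\mathrm{Conv}(\mathcal{O})$ is the convex hull of $\mathcal{O}$. The free robustness of a channel $\Psi$ with respect to $\mathcal{O}$ is $\gamma(\Psi)=\inf\{\lambda\ge0:\exists\,\Phi\in\mathrm{Conv}(\mathcal{O})\text{ with }(\Psi+\lambda\Phi)/(1+\lambda)\in\mathrm{Conv}(\mathcal{O})\}$. *)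

(* Defs.v *)
From HB Require Import structures.
From mathcomp Require Import all_boot all_order all_algebra.
From mathcomp Require Import complex mxtens.
From mathcomp Require Import boolp classical_sets reals.

Set Implicit Arguments.
Unset Strict Implicit.
Unset Printing Implicit Defensive.

Import Order.TTheory GRing.Theory Num.Theory.
Local Open Scope ring_scope.
Local Open Scope classical_set_scope.

Section QChannels.
Variable R : realType.
Local Notation C := (complex R).

Definition toC (x : R) : C := (x%:C)%C.

Definition adjmx m n (A : 'M[C]_(m, n)) : 'M[C]_(n, m) := (map_mx Num.conj A)^T.

(** Positive semidefinite: v^* A v >= 0 for every vector v (in the order of the
    numClosedField C, so the value is real and nonnegative). *)
Definition psd d (A : 'M[C]_d) : Prop :=
  forall v : 'cV[C]_d, 0 <= (adjmx v *m A *m v) 0 0.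

Definition qmat n := 'M[C]_((2 ^ n)%N).
Definition qmap n := qmat n -> qmat n.

(** Phi (x) id_k applied to an operator on C^(2^n) (x) C^k, defined blockwise:
    (Phi (x) id_k)(X) = sum_{a,b} Phi(X_{ab}) (x) |a><b|. *)
Definition ext_id n (Phi : qmap n) (k : nat) (X : 'M[C]_((2 ^ n * k)%N)) : 'M[C]_((2 ^ n * k)%N) :=
  \sum_(a < k) \sum_(b < k)
     (Phi (\matrix_(i, j) X (mxtens_index (i, a)) (mxtens_index (j, b)))
      *t (delta_mx a b : 'M[C]_k)).

Definition completely_positive n (Phi : qmap n) : Prop :=
  forall (k : nat) (X : 'M[C]_((2 ^ n * k)%N)), psd X -> psd (ext_id Phi X).

Definition trace_preserving n (Phi : qmap n) : Prop :=
  forall X : qmat n, \tr (Phi X) = \tr X.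

Definition is_channel n (Phi : qmap n) : Prop :=
  linear Phi /\ completely_positive Phi /\ trace_preserving Phi.

Definition conv_hull n (O : set (qmap n)) : set (qmap n) :=
  fun Phi => exists (k : nat) (w : 'I_k -> R) (Phis : 'I_k -> qmap n),
    [/\ forall i, 0 <= w i, \sum_(i < k) w i = 1, forall i, O (Phis i) &
        forall X, Phi X = \sum_(i < k) toC (w i) *: Phis i X].

Definition robustness_set n (O : set (qmap n)) (Psi : qmap n) : set R :=
  [set lam | 0 <= lam /\ exists Phi, conv_hull O Phi /\
      conv_hull O (fun X => toC (1 + lam)^-1 *: (Psi X + toC lam *: Phi X))].

Definition robustness n (O : set (qmap n)) (Psi : qmap n) : R :=
  inf (robustness_set O Psi).

(** gamma(Psi) < oo  iff the defining set is nonempty. *)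
Definition robustness_finite n (O : set (qmap n)) (Psi : qmap n) : Prop :=
  robustness_set O Psi !=set0.

Definition bits n := 'rV['F_2]_n.

Lemma card_bits n : #|{: bits n}| = (2 ^ n)%N.
Proof. by rewrite card_mx card_Fp // mul1n. Qed.

(** Index of the computational basis state |x> (any fixed bijection F_2^n -> [0,2^n)). *)
Definition bidx n (x : bits n) : 'I_((2 ^ n)%N) := cast_ord (card_bits n) (enum_rank x).

Definition ket n (x : bits n) : 'cV[C]_((2 ^ n)%N) := \col_i ((i == bidx x)%:R).

Definition proj n (x : bits n) : qmat n := ket x *m adjmx (ket x).

(** f_Phi(x,y) = Tr[Phi(|x><x|) |y><y|]  (a real number for channels; we take the real part). *)
Definition fPhi n (Phi : qmap n) (z : bits n * bits n) : R :=
  complex.Re (\tr (Phi (proj z.1) *m proj z.2)).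

Definition Fcl n (O : set (qmap n)) : set (bits n * bits n -> R) := fPhi (n:=n) @` O.

Definition emp_rademacher (Z : Type) (G : set (Z -> R)) (m : nat) (S : 'I_m -> Z) : R :=
  (2 ^ m)%N%:R^-1 * \sum_(eps : {ffun 'I_m -> bool})
     sup [set (m%:R^-1 * \sum_(i < m) ((-1) ^+ eps i) * g (S i)) | g in G].

Definition is_distribution (Z : finType) (D : {ffun Z -> R}) : Prop :=
  (forall z, 0 <= D z) /\ \sum_z D z = 1.

Definition rademacher (Z : finType) (D : {ffun Z -> R}) (G : set (Z -> R)) (m : nat) : R :=
  \sum_(S : {ffun 'I_m -> Z}) (\prod_(i < m) D (S i)) * emp_rademacher G S.

End QChannels.

(* Main.v *)
Require Import Defs.
From HB Require Import structures.
From mathcomp Require Import all_boot all_order all_algebra.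
From mathcomp Require Import complex mxtens.
From mathcomp Require Import boolp classical_sets reals.
From mathcomp Require Import ring lra.
Import Order.TTheory GRing.Theory Num.Theory.
Local Open Scope ring_scope.
Local Open Scope classical_set_scope.
Set Implicit Arguments.
Unset Strict Implicit.

Section H.
Variable R : realType.
Local Notation C := (complex R).

Lemma adj_delta m n (i : 'I_m) (j : 'I_n) : adjmx (delta_mx i j : 'M[C]_(m,n)) = delta_mx j i.
Proof.
apply/matrixP => a b; by rewrite !mxE conjC_nat andbC.
Qed.

Lemma ket_delta n (x : bits n) : ket R x = delta_mx (bidx x) 0.
Proof. apply/matrixP => a b. by rewrite !mxE ord1 eqxx andbT. Qed.

Lemma proj_delta n (x : bits n) : proj R x = delta_mx (bidx x) (bidx x).
Proof. by rewrite /proj ket_delta adj_delta mul_delta_mx. Qed.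

Lemma tr_mul_delta m (A : 'M[C]_m) c : \tr (A *m delta_mx c c) = A c c.
Proof.
rewrite -(mul_delta_mx (0 : 'I_1)) mulmxA mxtrace_mulC mulmxA -rowE -colE.
by rewrite /mxtrace big_ord1 !mxE.
Qed.

Lemma tr_delta m (c : 'I_m) : \tr (delta_mx c c : 'M[C]_m) = 1.
Proof. by rewrite -(mul1mx (delta_mx c c)) tr_mul_delta mxE eqxx. Qed.

Lemma psd_diag d (M : 'M[C]_d) p : psd M -> 0 <= M p p.
Proof.
move=> /(_ (delta_mx p 0)); rewrite adj_delta -rowE -colE.
by rewrite !mxE.
Qed.


Lemma adjmxM m n p (A : 'M[C]_(m,n)) (B : 'M[C]_(n,p)) : adjmx (A *m B) = adjmx B *m adjmx A.
Proof. by rewrite /adjmx map_mxM trmx_mul. Qed.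

Lemma adjmxK m n (A : 'M[C]_(m,n)) : adjmx (adjmx A) = A.
Proof. by apply/matrixP => i j; rewrite !mxE conjCK. Qed.

Lemma psd_rank1 d (u : 'cV[C]_d) : psd (u *m adjmx u).
Proof.
move=> v; rewrite !mulmxA -mulmxA.
rewrite -{2}(adjmxK v) -adjmxM.
rewrite mxE big_ord1 {2}/adjmx !mxE.
exact: mul_conjC_ge0.
Qed.

Lemma cp_diag n (Phi : qmap R n) (u : 'cV[C]_(2 ^ n)) c :
  completely_positive Phi -> 0 <= Phi (u *m adjmx u) c c.
Proof.
move=> CP.
pose u' : 'cV[C]_(2 ^ n * 1) := \col_p u (mxtens_unindex p).1 0.
have := CP 1%N (u' *m adjmx u') (psd_rank1 u').
move/(psd_diag (mxtens_index (c, ord0))).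
rewrite /ext_id !big_ord1 tensmxE [delta_mx _ _ _ _]mxE !eqxx mulr1.
suff -> : (\matrix_(i, j) (u' *m adjmx u') (mxtens_index (i, ord0)) (mxtens_index (j, ord0)))
   = u *m adjmx u by [].
apply/matrixP => i j; rewrite !mxE !big_ord1 !mxE !mxtens_indexK /=.
by rewrite !ord1.
Qed.


Lemma ReD (x y : C) : complex.Re (x + y) = complex.Re x + complex.Re y.
Proof. by case: x => a b; case: y. Qed.

Lemma Re_sum I (r : seq I) (P : pred I) (F : I -> C) :
  complex.Re (\sum_(i <- r | P i) F i) = \sum_(i <- r | P i) complex.Re (F i).
Proof. exact: (big_morph _ ReD). Qed.

Lemma Re_ge0 (x : C) : 0 <= x -> 0 <= complex.Re x.
Proof. by rewrite lecE => /andP[]. Qed.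

Lemma fPhi_bound n (Phi : qmap R n) z : is_channel Phi -> 0 <= fPhi Phi z <= 1.
Proof.
case=> _ [CP TP].
rewrite /fPhi (proj_delta z.2) tr_mul_delta.
have H0 k : 0 <= complex.Re (Phi (proj R z.1) k k) by apply: Re_ge0; apply: cp_diag.
apply/andP; split; first exact: H0.
have : complex.Re (\tr (Phi (proj R z.1))) = 1 by rewrite TP proj_delta tr_delta.
rewrite /mxtrace Re_sum (bigD1 (bidx z.2)) //= => <-.
rewrite lerDl; exact: sumr_ge0.
Qed.


Lemma ReM_toC (a : R) (x : C) : complex.Re (toC a * x) = a * complex.Re x.
Proof. by case: x => c d; rewrite /toC /= mul0r subr0. Qed.

Lemma trZ d (a : C) (A : 'M[C]_d) : \tr (a *: A) = a * \tr A.
Proof. by rewrite /mxtrace mulr_sumr; apply: eq_bigr => j _; rewrite mxE. Qed.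

Lemma trSum d I (r : seq I) (P : pred I) (F : I -> 'M[C]_d) :
  \tr (\sum_(i <- r | P i) F i) = \sum_(i <- r | P i) \tr (F i).
Proof. exact: (big_morph _ (@mxtraceD _ _) (mxtrace0 _ _)). Qed.

Lemma fPhi_conv n (Phi : qmap R n) k (w : 'I_k -> R) (Phis : 'I_k -> qmap R n) z :
  (forall X, Phi X = \sum_(i < k) toC (w i) *: Phis i X) ->
  fPhi Phi z = \sum_(i < k) w i * fPhi (Phis i) z.
Proof.
move=> HP; rewrite /fPhi HP mulmx_suml trSum Re_sum.
by apply: eq_bigr => i _; rewrite -(scalemxAl (toC (w i))) trZ ReM_toC.
Qed.

Lemma fPhi_comb n (Phi Phi' Psi : qmap R n) a l z :
  (forall X, Phi' X = toC a *: (Psi X + toC l *: Phi X)) ->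
  fPhi Phi' z = a * (fPhi Psi z + l * fPhi Phi z).
Proof.
move=> HP; rewrite /fPhi HP -scalemxAl trZ ReM_toC mulmxDl mxtraceD ReD.
by rewrite -scalemxAl trZ ReM_toC.
Qed.

End H.

Section Rad.
Variable R : realType.
Variable n m : nat.
Variable S : 'I_m -> bits n * bits n.
Hypothesis m0 : (0 < m)%N.

Definition val (e : {ffun 'I_m -> bool}) (g : bits n * bits n -> R) : R :=
  m%:R^-1 * \sum_(i < m) ((-1) ^+ e i) * g (S i).
Definition SG (G : set (bits n * bits n -> R)) e := [set val e g | g in G].

Lemma empE G : emp_rademacher G S = (2 ^ m)%N%:R^-1 * \sum_e sup (SG G e).
Proof. by []. Qed.

Lemma val_lin e f g a b : val e (fun z => a * f z + b * g z) = a * val e f + b * val e g.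
Proof.
rewrite /val (mulrCA a) (mulrCA b) -mulrDr; congr (_ * _).
by rewrite !mulr_sumr -big_split; apply: eq_bigr => i _ /=; ring.
Qed.

Lemma val_sum e k (w : 'I_k -> R) (f : 'I_k -> bits n * bits n -> R) :
  val e (fun z => \sum_(j < k) w j * f j z) = \sum_(j < k) w j * val e (f j).
Proof.
rewrite /val.
transitivity (\sum_(j < k) \sum_(i < m) m%:R^-1 * ((-1) ^+ e i * (w j * f j (S i)))).
  rewrite [RHS]exchange_big mulr_sumr; apply: eq_bigr => i _ /=.
  by rewrite !mulr_sumr.
apply: eq_bigr => j _; rewrite !mulr_sumr; apply: eq_bigr => i _; ring.
Qed.

Definition negf (e : {ffun 'I_m -> bool}) : {ffun 'I_m -> bool} := [ffun i => ~~ e i].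

Lemma val_neg e g : val (negf e) g = - val e g.
Proof.
rewrite /val -mulrN -sumrN; congr (_ * _); apply: eq_bigr => i _; rewrite ffunE.
by case: (e i); rewrite /= ?expr0 ?expr1 ?mulNr ?mul1r ?opprK.
Qed.

Lemma negfK : involutive negf.
Proof. by move=> e; apply/ffunP => i; rewrite !ffunE negbK. Qed.

Lemma val_ub e g : (forall z, 0 <= g z <= 1) -> val e g <= 1.
Proof.
move=> Hg; rewrite /val.
have m0' : m%:R != 0 :> R by rewrite pnatr_eq0 -lt0n.
apply: (@le_trans _ _ (m%:R^-1 * m%:R)); last by rewrite mulVf.
rewrite ler_wpM2l ?invr_ge0 ?ler0n //.
rewrite -[m in m%:R]card_ord -sumr_const; apply: ler_sum => i _.
have /andP[h0 h1] := Hg (S i).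
by case: (e i); rewrite /= ?expr0 ?expr1 ?mulN1r ?mul1r //; lra.
Qed.

Lemma SG_ub O e : (forall Phi, O Phi -> is_channel Phi) -> has_ubound (SG (Fcl O) e).
Proof.
move=> HO; exists 1 => y [g [Phi OPhi <-] <-].
by apply: val_ub => z; apply: fPhi_bound; apply: HO.
Qed.

Lemma le_sup_SG O e Phi : (forall Phi, O Phi -> is_channel Phi) -> O Phi ->
  val e (fPhi Phi) <= sup (SG (Fcl O) e).
Proof.
move=> HO OP; apply: (ub_le_sup (SG_ub e HO)).
by exists (fPhi Phi) => //; exists Phi.
Qed.


Section Main.
Variable O : set (qmap R n).
Variable Psi : qmap R n.
Hypothesis O0 : O !=set0.
Hypothesis HO : forall Phi, O Phi -> is_channel Phi.
Hypothesis HPsi : is_channel Psi.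

Let sO e := sup (SG (Fcl O) e).
Let sU e := sup (SG (Fcl (O `|` [set Psi])) e).

Lemma HU : forall Phi, (O `|` [set Psi]) Phi -> is_channel Phi.
Proof. by move=> Phi [OP| ->] //; apply: HO. Qed.

Lemma conv_le e Phi : conv_hull O Phi -> val e (fPhi Phi) <= sO e.
Proof.
case=> k [w [Phis [w0 w1 OP HP]]].
have -> : fPhi Phi = (fun z => \sum_(i < k) w i * fPhi (Phis i) z).
  by apply: funext => z; exact: fPhi_conv.
rewrite val_sum.
apply: (@le_trans _ _ (\sum_(i < k) w i * sO e)).
  by apply: ler_sum => i _; rewrite ler_wpM2l //; exact: le_sup_SG.
by rewrite -mulr_suml w1 mul1r.
Qed.

Lemma sO_width e : 0 <= sO e + sO (negf e).
Proof.
case: O0 => Phi OP.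
have h1 := le_sup_SG e HO OP; have h2 := le_sup_SG (negf e) HO OP.
rewrite val_neg in h2; rewrite /sO; lra.
Qed.

Lemma sO_le_sU e : sO e <= sU e.
Proof.
apply: ge_sup.
  case: O0 => Phi OP; exists (val e (fPhi Phi)); exists (fPhi Phi) => //; by exists Phi.
move=> y [g [Phi OP <-] <-]; apply: (le_sup_SG e HU); by left.
Qed.

Lemma sU_le e x : val e (fPhi Psi) <= x -> sO e <= x -> sU e <= x.
Proof.
move=> h1 h2; apply: ge_sup.
  case: O0 => Phi OP; exists (val e (fPhi Phi)); exists (fPhi Phi) => //; exists Phi => //; by left.
move=> y [g [Phi [OP| ->] <-] <-] //.
exact: le_trans (le_sup_SG e HO OP) h2.
Qed.

Lemma pair_bound e lam : robustness_set O Psi lam ->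
  sU e + sU (negf e) <= (1 + lam) * (sO e + sO (negf e)).
Proof.
case=> lam0 [Phi [cP cP']].
have hl : 0 < 1 + lam by lra.
have Hf : fPhi Psi = (fun z => (1 + lam) *
     fPhi (fun X => toC (1 + lam)^-1 *: (Psi X + toC lam *: Phi X)) z + (- lam) * fPhi Phi z).
  apply: funext => z; rewrite (fPhi_comb (Phi:=Phi) (Psi:=Psi) (a:=(1+lam)^-1) (l:=lam) _ (fun X => erefl)).
  rewrite mulrA mulfV ?mul1r; [ring | lra].
set x := val e (fPhi Psi).
have hx : val (negf e) (fPhi Psi) = - x by rewrite val_neg.
have a1 := conv_le e cP'; have a2 := conv_le (negf e) cP.
have b1 := conv_le (negf e) cP'; have b2 := conv_le e cP.
rewrite !val_neg in a2 b1.
have hx' : x = (1 + lam) * val e (fPhi (fun X => toC (1 + lam)^-1 *: (Psi X + toC lam *: Phi X)))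
               + (- lam) * val e (fPhi Phi) by rewrite /x {1}Hf val_lin.
have w := sO_width e.
move: a1 a2 b1 b2 hx' w.
set u := val e _; set v := val e (fPhi Phi); set A := sO e; set B := sO (negf e) => a1 a2 b1 b2 hx' w.
have p1 : 0 <= lam * (A - u) by apply: mulr_ge0; lra.
have p2 : 0 <= lam * (B + v) by apply: mulr_ge0; lra.
have p3 : 0 <= lam * (B + u) by apply: mulr_ge0; lra.
have p4 : 0 <= lam * (A - v) by apply: mulr_ge0; lra.
have p5 : 0 <= lam * (A + B) by apply: mulr_ge0; lra.
have U1 : x <= A -> sU e <= A by move=> h; exact: sU_le h (le_refl _).
have U2 : A <= x -> sU e <= x by move=> h; exact: sU_le (le_refl _) h.
have U3 : - x <= B -> sU (negf e) <= B by move=> h; apply: sU_le (le_refl _); rewrite hx.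
have U4 : B <= - x -> sU (negf e) <= - x by move=> h; apply: sU_le h; rewrite hx.
have [hxA|hxA] := lerP x A; have [hxB|hxB] := lerP (- x) B.
- have h1 := U1 hxA; have h2 := U3 hxB; nra.
- have h1 := U1 hxA; have h2 := U4 (ltW hxB); nra.
- have h1 := U2 (ltW hxA); have h2 := U3 hxB; nra.
- have h1 := U2 (ltW hxA); have h2 := U4 (ltW hxB); nra.
Qed.


Lemma sum_negf (F : {ffun 'I_m -> bool} -> R) : \sum_e F (negf e) = \sum_e F e.
Proof. by rewrite [RHS](reindex_inj (can_inj negfK)). Qed.

Lemma sum_bound lam : robustness_set O Psi lam ->
  \sum_e sU e <= (1 + lam) * \sum_e sO e.
Proof.
move=> hl.
have : \sum_e (sU e + sU (negf e)) <= \sum_e (1 + lam) * (sO e + sO (negf e)).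
  by apply: ler_sum => e _; exact: pair_bound.
rewrite big_split -mulr_sumr big_split /= !(sum_negf (fun e => sU e)) !(sum_negf (fun e => sO e)).
nra.
Qed.

Lemma sumO_ge0 : 0 <= \sum_e sO e.
Proof.
have : 0 <= \sum_e (sO e + sO (negf e)) by apply: sumr_ge0 => e _; exact: sO_width.
rewrite big_split /= (sum_negf (fun e => sO e)); lra.
Qed.

Hypothesis Hfin : robustness_finite O Psi.

Lemma emp_bounds : emp_rademacher (Fcl O) S <= emp_rademacher (Fcl (O `|` [set Psi])) S
   <= (1 + robustness O Psi) * emp_rademacher (Fcl O) S.
Proof.
rewrite !empE -/sO -/sU.
have c0 : 0 < (2 ^ m)%N%:R^-1 :> R by rewrite invr_gt0 ltr0n expn_gt0.
set c := (2 ^ m)%N%:R^-1 in c0 *.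
have hO := sumO_ge0.
have key : \sum_e sU e <= (1 + robustness O Psi) * \sum_e sO e.
  case: Hfin => l0 hl0.
  have [z|pos] := eqVneq (\sum_e sO e) 0.
    by have := sum_bound hl0; rewrite z !mulr0.
  have pos' : 0 < \sum_e sO e by rewrite lt_neqAle eq_sym pos hO.
  have : (\sum_e sU e) / (\sum_e sO e) - 1 <= robustness O Psi.
    apply: lb_le_inf; first by exists l0.
    move=> l hl; have := sum_bound hl.
    rewrite lerBlDl ler_pdivrMr //.
  rewrite lerBlDl ler_pdivrMr // mulrC //.
apply/andP; split.
  by rewrite ler_wpM2l ?(ltW c0) //; apply: ler_sum => e _; exact: sO_le_sU.
rewrite mulrCA ler_wpM2l ?(ltW c0) //.
Qed.

End Main.
End Rad.

Theorem theorem1 (R : realType) (n : nat) (O : set (qmap R n)) (Psi : qmap R n) :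
  O !=set0 ->
  (forall Phi, O Phi -> is_channel Phi) ->
  is_channel Psi ->
  robustness_finite O Psi ->
  (forall (m : nat) (S : 'I_m -> bits n * bits n), (0 < m)%N ->
     emp_rademacher (Fcl O) S <= emp_rademacher (Fcl (O `|` [set Psi])) S
     <= (1 + robustness O Psi) * emp_rademacher (Fcl O) S) /\
  (forall (m : nat) (D : {ffun bits n * bits n -> R}), is_distribution D -> (0 < m)%N ->
     rademacher D (Fcl O) m <= rademacher D (Fcl (O `|` [set Psi])) m
     <= (1 + robustness O Psi) * rademacher D (Fcl O) m).
Proof.
move=> O0 HO HPsi Hfin; split.
  by move=> m S m0; exact: (emp_bounds S m0 O0 HO HPsi Hfin).
move=> m D [D0 D1] m0.
have H (S : {ffun 'I_m -> bits n * bits n}) := emp_bounds S m0 O0 HO HPsi Hfin.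
have P0 (S : {ffun 'I_m -> bits n * bits n}) : 0 <= \prod_(i < m) D (S i).
  by apply: prodr_ge0 => i _; exact: D0.
rewrite /rademacher; apply/andP; split.
  apply: ler_sum => S _; move: (H S) => /andP[h1 _].
  exact: (ler_wpM2l (P0 S) h1).
rewrite mulr_sumr; apply: ler_sum => S _; move: (H S) => /andP[_ h2].
have e : (1 + robustness O Psi) * (\prod_(i < m) D (S i) * emp_rademacher (Fcl O) S)
   = \prod_(i < m) D (S i) * ((1 + robustness O Psi) * emp_rademacher (Fcl O) S).
  by rewrite mulrCA.
rewrite e; exact: (ler_wpM2l (P0 S) h2).
Qed.
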